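(* Let $b'>\delta$ be fixed. For a query $\mathbf Q=(\mathbf q,v)$ with $v\in(0,\infty)$, put $b=\sqrt{v/2}$, $P(\mathbf Q)=\frac{\gamma b'}{b(b'-\delta)}\sum_{i=1}^nc_i|q_i|$, $s_i=\gamma|q_i|$, $s_i'=\frac{\gamma b'\delta|q_i|}{b(b'-\delta)}$, and define the randomized price and micro-payments $\pi(\mathbf Q)=\mathcal K'_{\mathbf Q}(\mathbf c)=P(\mathbf Q)+\rho'$, and $\mu_i(\mathbf Q)=\left(\frac{s_i}{b}+\frac{s_i'}{b'}\right)c_i+\frac{\pi(\mathbf Q)-P(\mathbf Q)}{n}$ for $i=1,\ldots,n$. Then the framework is balanced in expectation, namely: (a) $\mathbf Q\mapsto\mathbb E[\pi(\mathbf Q)]$ is arbitrage-free; (b) for each $i$, if $q_i=0$ then $\mathbb E[\mu_i(\mathbf Q)]=0$; (c) for each $i$, $\mathbf Q\mapsto\mathbb E[\mu_i(\mathbf Q)]$ is arbitrage-free; (d) $\sum_{i=1}^n\mathbb E[\mu_i(\mathbf Q)]\le\mathbb E[\pi(\mathbf Q)]$ for every query $\mathbf Q$; (e) for each $i$ and every query $\mathbf Q$, $\mathbb E[\mu_i(\mathbf Q)]\ge c_i\,(\varepsilon_i(\mathcal K_{\mathbf Q})+\varepsilon_i(\mathcal K'_{\mathbf Q}))$.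
   Context: Fix a bounded $X\subseteq\mathbb R$, $\gamma=\sup_{x\in X}|x|$; data items $x_i\in X$, databases $\mathbf x\in X^n$. Each owner $i$ has a linear contract $W_i(\varepsilon)=c_i\varepsilon$ with constant $c_i\in Y$, where $Y\subseteq[0,\infty)$ is bounded and $\delta=\sup_{c\in Y}|c|$; $\mathbf c=(c_1,\ldots,c_n)\in Y^n$. For a vector $\mathbf z$, $\mathbf z^{(i)}$ denotes $\mathbf z$ with the $i$-th coordinate set to $0$. Queries are pairs $\mathbf Q=(\mathbf q,v)$ with $\mathbf q\in\mathbb R^n$, $v\in(0,\infty)$; $b=\sqrt{v/2}$. $\mathrm{Lap}(\beta)$ is the distribution with density $\frac{1}{2\beta}e^{-|t|/\beta}$. The query mechanism is $\mathcal K_{\mathbf Q}(\mathbf x)=\mathbf q\cdot\mathbf x+\rho$ with $\rho\sim\mathrm{Lap}(b)$; the price mechanism is $\mathcal K'_{\mathbf Q}(\mathbf c)=\frac{\gamma b'}{b(b'-\delta)}\sum_ic_i|q_i|+\rho'$ with $\rho'\sim\mathrm{Lap}(b')$, independent of $\rho$. Privacy losses: $\varepsilon_i(\mathcal K_{\mathbf Q})=\sup_{S,\mathbf x\in X^n}\left|\log\frac{\Pr[\mathcal K_{\mathbf Q}(\mathbf x)\in S]}{\Pr[\mathcal K_{\mathbf Q}(\mathbf x^{(i)})\in S]}\right|$ and $\varepsilon_i(\mathcal K'_{\mathbf Q})=\sup_{S,\mathbf c\in Y^n}\left|\log\frac{\Pr[\mathcal K'_{\mathbf Q}(\mathbf c)\in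 S]}{\Pr[\mathcal K'_{\mathbf Q}(\mathbf c^{(i)})\in S]}\right|$, suprema also over measurable $S\subseteq\mathbb R$. The determinacy relation $\mathbf S\rightarrow\mathbf Q$ is the smallest relation satisfying: (Summation) $\{(\mathbf q_1,v_1),\ldots,(\mathbf q_k,v_k)\}\rightarrow(\sum_j\mathbf q_j,\sum_jv_j)$; (Scalar multiplication) $\{(\mathbf q,v)\}\rightarrow(c\mathbf q,c^2v)$ for $c\in\mathbb R$; (Relaxation) $\{(\mathbf q,v)\}\rightarrow(\mathbf q,v')$ for $v\le v'$; (Transitivity) if $\mathbf S_j\rightarrow\mathbf Q_j$ for all $j$ and $\{\mathbf Q_1,\ldots,\mathbf Q_k\}\rightarrow\mathbf Q$ then $\mathbf S_1\uplus\cdots\uplus\mathbf S_k\rightarrow\mathbf Q$. A real function $g$ on queries with $v\in(0,\infty)$ is arbitrage-free if for every $m\ge1$ and such queries with $\{\mathbf Q_1,\ldots,\mathbf Q_m\}\rightarrow\mathbf Q$, $g(\mathbf Q)\le\sum_jg(\mathbf Q_j)$. *)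

(* Defs.v *)
From HB Require Import structures.
From mathcomp Require Import all_boot all_order all_algebra.
From mathcomp Require Import all_classical all_reals all_analysis.
Set Implicit Arguments. Unset Strict Implicit. Unset Printing Implicit Defensive.
Import Order.TTheory GRing.Theory Num.Theory.
Import numFieldNormedType.Exports.
Local Open Scope classical_set_scope.
Local Open Scope ring_scope.

Section Defs.
Variables (R : realType) (n : nat).

Definition query := ('rV[R]_n * R)%type.

Definition qb (Q : query) : R := Num.sqrt (Q.2 / 2).

Definition gammaX (X : set R) : R := sup [set `|x| | x in X].
Definition deltaY (Y : set R) : R := sup [set `|y| | y in Y].

Definition zero_at (z : 'rV[R]_n) (i : 'I_n) : 'rV[R]_n :=
  \row_j (if j == i then 0 else z ord0 j).

Definition lap_pdf (beta t : R) : R := expR (- `|t| / beta) / (2 * beta).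

Definition lap_prob (beta m : R) (S : set R) : \bar R :=
  (\int[@lebesgue_measure R]_(t in S) (lap_pdf beta (t - m))%:E)%E.

Definition lapE (beta : R) (f : R -> R) : \bar R :=
  (\int[@lebesgue_measure R]_t (f t * lap_pdf beta t)%:E)%E.

(* Privacy loss of owner i for the mechanism z |-> M z + rho, rho ~ Lap(beta),
   with inputs z ranging over D^n:
   sup over measurable S and z in D^n of |log (Pr[K(z) in S] / Pr[K(z^(i)) in S])|
   (the sup is over the S for which the ratio is defined, i.e. both
   probabilities are positive). *)
Definition privacy_loss (D : set R) (M : 'rV[R]_n -> R) (beta : R)
    (i : 'I_n) : \bar R :=
  ereal_sup [set e : \bar R | exists (S : set R) (z : 'rV[R]_n),
    [/\ measurable S, (forall j, D (z ord0 j)),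
        (0 < lap_prob beta (M z) S)%E,
        (0 < lap_prob beta (M (zero_at z i)) S)%E &
        e = (`| ln (fine (lap_prob beta (M z) S)
                    / fine (lap_prob beta (M (zero_at z i)) S)) |)%:E]].

(* the query mechanism K_Q(x) = q . x + rho, rho ~ Lap(b) *)
Definition K_mean (Q : query) (x : 'rV[R]_n) : R :=
  \sum_(j < n) Q.1 ord0 j * x ord0 j.

Definition Pcoef (gamma delta b' : R) (Q : query) : R :=
  gamma * b' / (qb Q * (b' - delta)).

Definition K'_mean (gamma delta b' : R) (Q : query) (c : 'rV[R]_n) : R :=
  Pcoef gamma delta b' Q * \sum_(j < n) c ord0 j * `|Q.1 ord0 j|.

Definition Pprice (gamma delta b' : R) (c : 'rV[R]_n) (Q : query) : R :=
  K'_mean gamma delta b' Q c.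

Definition Eprice (gamma delta b' : R) (c : 'rV[R]_n) (Q : query) : \bar R :=
  lapE b' (fun t => Pprice gamma delta b' c Q + t).

Definition Emicro (gamma delta b' : R) (c : 'rV[R]_n) (i : 'I_n) (Q : query)
    : \bar R :=
  let s := gamma * `|Q.1 ord0 i| in
  let s' := gamma * b' * delta * `|Q.1 ord0 i| / (qb Q * (b' - delta)) in
  lapE b' (fun t =>
    (s / qb Q + s' / b') * c ord0 i
    + ((Pprice gamma delta b' c Q + t) - Pprice gamma delta b' c Q) / n%:R).

(* determinacy relation S -> Q on (multi)sets of queries, represented as
   sequences; closure under permutation is built into Transitivity. *)
Inductive determ : seq query -> query -> Prop :=
| det_sum (S : seq query) : (0 < size S)%N ->
    determ S (\sum_(Q <- S) Q.1, \sum_(Q <- S) Q.2)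
| det_scale (q : 'rV[R]_n) (v a : R) : determ [:: (q, v)] (a *: q, a ^+ 2 * v)
| det_relax (q : 'rV[R]_n) (v v' : R) : v <= v' -> determ [:: (q, v)] (q, v')
| det_trans (Ss : seq (seq query)) (Qs : seq query) (Q : query) (S : seq query) :
    size Ss = size Qs -> (0 < size Qs)%N ->
    (forall j, (j < size Qs)%N -> determ (nth [::] Ss j) (nth (0, 0) Qs j)) ->
    determ Qs Q -> perm_eq S (flatten Ss) -> determ S Q.

Definition arbitrage_free (g : query -> \bar R) : Prop :=
  forall (S : seq query) (Q : query),
    (0 < size S)%N -> (forall Q', Q' \in S -> 0 < Q'.2) -> 0 < Q.2 ->
    determ S Q -> (g Q <= \sum_(Q' <- S) g Q')%E.

End Defs.

(* Main.v *)
Require Import Defs.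
From HB Require Import structures.
From mathcomp Require Import all_boot all_order all_algebra.
From mathcomp Require Import all_classical all_reals all_analysis.
From mathcomp Require Import measurable_realfun ftc exponential_distribution.
From mathcomp Require Import ring lra.
Import Order.TTheory GRing.Theory Num.Theory.
Import numFieldTopology.Exports.
Local Open Scope classical_set_scope.
Local Open Scope ring_scope.
Lemma int_exp0y (R : realType) (r : R) : 0 < r ->
  (\int[@lebesgue_measure R]_(x in `[0%R, +oo[) (r * expR (- r * x))%:E = 1)%E.
Proof.
move=> r0.
have cexpNM : continuous (fun z : R^o => expR (- r * z)).
  move=> z; apply: continuous_comp; last exact: continuous_expR.
  by apply: continuousM => //; apply: (@continuousN _ R^o); exact: cst_continuous.
rewrite (@ge0_continuous_FTC2y _ (fun x => r * expR (- r * x))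
  (fun x => - (expR (- r * x))) 0 0)//.
- by rewrite mulr0 expR0 EFinN oppeK add0e.
- by move=> x _; rewrite mulr_ge0 ?expR_ge0 ?ltW.
- apply: continuous_subspaceT => x.
  apply: (@continuousM _ R^o (fun=> r) (fun x => expR (- r * x))) => //; [exact: cvg_cst|exact: cexpNM].
- rewrite -[X in _ --> X]oppr0; apply: cvgN.
  rewrite (_ : (fun x => expR (- r * x)) =
               (fun z => expR (- z)) \o (fun z => r * z)); last first.
    by apply: eq_fun => x; rewrite mulNr.
  apply: (@cvg_comp _ _ _ _ _ _ (pinfty_nbhs R)); last exact: cvgr_expR.
  exact: gt0_cvgMry.
- by apply: cvgN; apply/cvg_at_right_filter; exact: cexpNM.
- move=> x xin; rewrite (derive1_exponential_pdf _ xin) exponential_pdfE//.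
  by move: xin; rewrite in_itv/= andbT => /ltW.
Qed.

Lemma int_split (R : realType) (f : R -> R) : (forall x, 0 <= f x) ->
  continuous f ->
  (\int[@lebesgue_measure R]_x (f x)%:E =
   \int[@lebesgue_measure R]_(x in `[0%R, +oo[) (f x)%:E +
   \int[@lebesgue_measure R]_(x in `[0%R, +oo[) (f (- x))%:E)%E.
Proof.
move=> f0 cf.
have mf : measurable_fun [set: R] f by exact: continuous_measurable_fun.
have mposnums : measurable [set x : R | 0 <= x]%R by rewrite -set_itvcy.
rewrite -(setUv [set x : R | 0 <= x]%R) ge0_integral_setU//= ; last 4 first.
  exact: measurableC.
  by apply/measurable_EFinP; rewrite setUv.
  by move=> x _; rewrite lee_fin.
  exact/disj_setPCl.
rewrite -set_itvcy; congr (_ + _)%E.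
rewrite setCitvr.
rewrite integral_itv_bndo_bndc; last exact/measurable_EFinP/measurable_funTS.
rewrite -{1}oppr0 ge0_integration_by_substitutionNy//.
exact: continuous_subspaceT.
Qed.

Lemma lap_pdf_ge0 (R : realType) (b t : R) : 0 < b -> 0 <= lap_pdf b t.
Proof. by move=> b0; rewrite /lap_pdf divr_ge0 ?expR_ge0 // mulr_ge0 // ltW. Qed.

Lemma lap_pdfN (R : realType) (b t : R) : lap_pdf b (- t) = lap_pdf b t.
Proof. by rewrite /lap_pdf normrN. Qed.

Lemma cont_lap (R : realType) (b : R) : continuous (lap_pdf b).
Proof.
move=> x; rewrite /lap_pdf.
apply: (@continuousM _ R^o (fun t => expR (- `|t| / b)) (fun=> (2 * b)^-1)); last exact: cvg_cst.
apply: continuous_comp; last exact: continuous_expR.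
apply: (@continuousM _ R^o (fun t => - `|t|) (fun=> b^-1)); last exact: cvg_cst.
apply: (@continuousN _ R^o R^o (fun t : R^o => `|t|)).
exact: norm_continuous.
Qed.

Lemma int_lap_half (R : realType) (b : R) : 0 < b ->
  (\int[@lebesgue_measure R]_(x in `[0%R, +oo[) (lap_pdf b x)%:E = (2^-1)%:E)%E.
Proof.
move=> b0.
have r0 : 0 < b^-1 by rewrite invr_gt0.
transitivity (\int[@lebesgue_measure R]_(x in `[0%R, +oo[)
   ((2^-1)%:E * (b^-1 * expR (- b^-1 * x))%:E))%E.
  apply: eq_integral => x; rewrite inE/= in_itv/= andbT => x0.
  rewrite -EFinM; congr EFin.
  have -> : - b^-1 * x = - x / b by rewrite mulNr mulrC mulNr.
  by rewrite /lap_pdf ger0_norm //; field; rewrite gt_eqF.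
rewrite (ge0_integralZl (@lebesgue_measure R))//.
- by rewrite int_exp0y // mule1.
- apply/measurable_EFinP; apply: measurable_funTS.
  apply: continuous_measurable_fun => x.
  apply: (@continuousM _ R^o (fun=> b^-1) (fun x => expR (- b^-1 * x))); first exact: cvg_cst.
  apply: continuous_comp; last exact: continuous_expR.
  by apply: continuousM => //; apply: (@continuousN _ R^o); exact: cst_continuous.
- by move=> x _; rewrite lee_fin mulr_ge0 ?expR_ge0 // ltW.
Qed.

Lemma int_lap (R : realType) (b : R) : 0 < b ->
  (\int[@lebesgue_measure R]_x (lap_pdf b x)%:E = 1)%E.
Proof.
move=> b0; rewrite int_split //; last exact: cont_lap.
  under [X in (_ + X)%E]eq_integral do rewrite lap_pdfN.
  by rewrite int_lap_half // -EFinD -[X in (_ + X)%R]div1r -[X in (X + _)%R]div1r -splitr.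
by move=> x; exact: lap_pdf_ge0.
Qed.

Lemma integrable_lap (R : realType) (b : R) : 0 < b ->
  (@lebesgue_measure R).-integrable setT (fun x => (lap_pdf b x)%:E).
Proof.
move=> b0; apply/integrableP; split.
  by apply/measurable_EFinP; apply: continuous_measurable_fun; exact: cont_lap.
under eq_integral do rewrite /= ger0_norm ?lap_pdf_ge0//.
by rewrite int_lap // ltry.
Qed.

Lemma lap_tbound (R : realType) (b t : R) : 0 < b ->
  `|t * lap_pdf b t| <= 4 * b * lap_pdf (2 * b) t.
Proof.
move=> b0.
set u := `|t| / (2 * b).
have u0 : 0 <= u by rewrite divr_ge0 // mulr_ge0 // ltW.
have hE : expR (- `|t| / b) = expR (- u) * expR (- u).
  rewrite -expRD; congr expR; rewrite /u; field; exact: lt0r_neq0.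
have hE2 : expR (- `|t| / (2 * b)) = expR (- u) by rewrite /u mulNr.
have F1 : expR u * expR (- u) = 1 by rewrite expRxMexpNx_1.
have Fu : u <= expR u by apply: le_trans (expR_ge1Dx u); rewrite lerDr.
have E0 : 0 < expR (- u) := expR_gt0 _.
rewrite normrM (ger0_norm (@lap_pdf_ge0 _ _ _ b0)) /lap_pdf hE hE2.
have -> : `|t| = u * (2 * b) by rewrite /u divfK // mulf_neq0 // lt0r_neq0.
have -> : 4 * b * (expR (- u) / (2 * (2 * b))) = expR (- u).
  by field; exact: lt0r_neq0.
have -> : u * (2 * b) * (expR (- u) * expR (- u) / (2 * b)) =
   u * expR (- u) * expR (- u) by field; exact: lt0r_neq0.
nra.
Qed.

Lemma cont_tlap (R : realType) (b : R) : continuous (fun x : R => x * lap_pdf b x).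
Proof.
move=> x.
apply: (@continuousM _ R^o (fun x => x) (lap_pdf b)); first exact: cvg_id.
exact: cont_lap.
Qed.

Lemma integrable_tlap {R : realType} {b : R} : 0 < b ->
  (@lebesgue_measure R).-integrable setT (fun x => (x * lap_pdf b x)%:E).
Proof.
move=> b0.
apply: (@le_integrable _ _ _ (@lebesgue_measure R) setT measurableT _ (fun x => ((4 * b)%:E * (lap_pdf (2 * b) x)%:E)%E)).
- by apply/measurable_EFinP; apply: continuous_measurable_fun; exact: cont_tlap.
- move=> x _; rewrite -EFinM !abse_EFin lee_fin [X in _ <= X]ger0_norm.
    exact: lap_tbound.
  by rewrite mulr_ge0 ?lap_pdf_ge0 ?mulr_ge0 ?mulr_gt0 // ltW.
- apply: integrableZl => //; by apply: integrable_lap; rewrite mulr_gt0.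
Qed.

Lemma int_tlap (R : realType) (b : R) : 0 < b ->
  (\int[@lebesgue_measure R]_x (x * lap_pdf b x)%:E = 0)%E.
Proof.
move=> b0.
set g := fun x : R => x * lap_pdf b x.
have gN x : g (- x) = - g x by rewrite /g lap_pdfN mulNr.
set h1 := fun x => Num.max (g x) 0.
set h2 := fun x => Num.max (- g x) 0.
have ch1 : continuous h1.
  move=> x; apply: (@continuous_max _ _ g (fun=> 0)); [exact: cont_tlap | exact: cvg_cst].
have ch2 : continuous h2.
  move=> x; apply: (@continuous_max _ _ (fun x => - g x) (fun=> 0)); last exact: cvg_cst.
  apply: (@continuousN _ R^o R^o g); exact: cont_tlap.
have E1 : (\int[@lebesgue_measure R]_x ((fun x => (g x)%:E)^\+ x) =
           \int[@lebesgue_measure R]_x (h1 x)%:E)%E.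
  by apply: eq_integral => x _; rewrite funeposE /h1 EFin_max.
have E2 : (\int[@lebesgue_measure R]_x ((fun x => (g x)%:E)^\- x) =
           \int[@lebesgue_measure R]_x (h2 x)%:E)%E.
  by apply: eq_integral => x _; rewrite funenegE /h2 EFin_max.
have fin : (\int[@lebesgue_measure R]_x ((fun x => (g x)%:E)^\+ x))%E \is a fin_num.
  by have := integrable_pos_fin_num measurableT (integrable_tlap (R:=R) b0).
rewrite integralE.
have -> : (\int[@lebesgue_measure R]_x ((fun x => (g x)%:E)^\- x) =
           \int[@lebesgue_measure R]_x ((fun x => (g x)%:E)^\+ x))%E.
  rewrite E1 E2 !int_split //; last first.
  - by move=> x; rewrite /h1 le_max lexx orbT.
  - by move=> x; rewrite /h2 le_max lexx orbT.
  rewrite addeC; congr (_ + _)%E; apply: eq_integral => x _;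
    by rewrite /h1 /h2 gN ?opprK.
exact: subee.
Qed.

Lemma lapE_lin (R : realType) (b A k : R) : 0 < b ->
  lapE b (fun t => A + t * k) = A%:E.
Proof.
move=> b0; rewrite /lapE.
under eq_integral do rewrite mulrDl EFinD (mulrC _ k) -mulrA !EFinM.
rewrite integralD //; last 2 first.
- by apply: integrableZl => //; exact: integrable_lap.
- by apply: integrableZl => //; exact: integrable_tlap.
rewrite integralZl //; last exact: integrable_lap.
rewrite integralZl //; last exact: integrable_tlap.
by rewrite int_lap // int_tlap // mule1 mule0 adde0.
Qed.

Definition Nw {R : realType} {n : nat} (w : 'I_n -> R) (q : 'rV[R]_n) : R :=
  \sum_(j < n) w j * `|q ord0 j|.

Definition Fw {R : realType} {n : nat} (w : 'I_n -> R) (Q : query R n) : R :=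
  Nw w Q.1 * (qb Q)^-1.

Definition invq {R : realType} {n : nat} (Q : query R n) : Prop :=
  0 <= Q.2 /\ (Q.2 = 0 -> Q.1 = 0).

Lemma Nw_ge0 {R : realType} {n : nat} (w : 'I_n -> R) q :
  (forall j, 0 <= w j) -> 0 <= Nw w q.
Proof. by move=> w0; apply: sumr_ge0 => j _; rewrite mulr_ge0. Qed.

Lemma Nw0 {R : realType} {n : nat} (w : 'I_n -> R) : Nw w 0 = 0.
Proof. by rewrite /Nw big1 // => j _; rewrite mxE normr0 mulr0. Qed.

Lemma NwD {R : realType} {n : nat} (w : 'I_n -> R) q1 q2 :
  (forall j, 0 <= w j) -> Nw w (q1 + q2) <= Nw w q1 + Nw w q2.
Proof.
move=> w0; rewrite /Nw -big_split /=; apply: ler_sum => j _.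
by rewrite mxE -mulrDr ler_wpM2l // ler_normD.
Qed.

Lemma NwZ {R : realType} {n : nat} (w : 'I_n -> R) a q :
  Nw w (a *: q) = `|a| * Nw w q.
Proof.
rewrite /Nw mulr_sumr; apply: eq_bigr => j _.
by rewrite mxE normrM mulrCA.
Qed.

Lemma Nw_sum {R : realType} {n : nat} (w : 'I_n -> R) (S : seq (query R n)) :
  (forall j, 0 <= w j) ->
  Nw w (\sum_(Q <- S) Q.1) <= \sum_(Q <- S) Nw w Q.1.
Proof.
move=> w0; elim: S => [|Q S IH]; first by rewrite !big_nil Nw0.
rewrite !big_cons; apply: le_trans (NwD _ _ _ w0) _.
by rewrite lerD2l.
Qed.

Lemma Fw_ge0 {R : realType} {n : nat} (w : 'I_n -> R) Q :
  (forall j, 0 <= w j) -> 0 <= Fw w Q.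
Proof. by move=> w0; rewrite /Fw mulr_ge0 ?Nw_ge0 // invr_ge0 sqrtr_ge0. Qed.

Lemma le_mem_sum {R : realType} {T : eqType} (f : T -> R) (s : seq T) x :
  (forall y, y \in s -> 0 <= f y) -> x \in s -> f x <= \sum_(y <- s) f y.
Proof.
elim: s => [//|y s IH] f0; rewrite in_cons big_cons => /orP[/eqP ->|xs].
  by rewrite lerDl big_seq sumr_ge0 // => z zs; apply: f0; rewrite in_cons zs orbT.
apply: le_trans (IH _ xs) _; first by move=> z zs; apply: f0; rewrite in_cons zs orbT.
by rewrite lerDr f0 // in_cons eqxx.
Qed.

Lemma sqrt_inv_anti {R : realType} (v V : R) : 0 < v -> v <= V ->
  (Num.sqrt (V / 2))^-1 <= (Num.sqrt (v / 2))^-1.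
Proof.
move=> v0 vV.
have hv : 0 < Num.sqrt (v / 2) by rewrite sqrtr_gt0 divr_gt0.
have hV : 0 < Num.sqrt (V / 2) by rewrite sqrtr_gt0 divr_gt0 // (lt_le_trans v0).
rewrite lef_pV2 ?posrE // ler_sqrt ?divr_ge0 // ?ler_pM2r ?invr_gt0 //.
exact: le_trans (ltW v0) vV.
Qed.

Lemma arbF_ind {R : realType} {n : nat} (w : 'I_n -> R) :
  (forall j, 0 <= w j) ->
  forall S Q, determ S Q -> (forall Q', Q' \in S -> invq Q') ->
  invq Q /\ Fw w Q <= \sum_(Q' <- S) Fw w Q'.
Proof.
move=> w0 S Q; elim => {S Q}.
-
  move=> S _ hS.
  have vle k : k \in S -> k.2 <= \sum_(Q <- S) Q.2.
    by move=> kS; apply: le_mem_sum kS => y /hS [].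
  split.
    split => /=; first by rewrite big_seq sumr_ge0 // => y /hS [].
    move=> V0; rewrite big_seq big1 // => y yS.
    have [y0 yq] := hS y yS; apply: yq; apply/le_anti; rewrite y0 andbT -V0.
    exact: vle.
  rewrite /Fw /=.
  have hi : 0 <= (Num.sqrt ((\sum_(Q <- S) Q.2) / 2))^-1 by rewrite invr_ge0 sqrtr_ge0.
  apply: le_trans (ler_wpM2r hi (Nw_sum w S w0)) _.
  rewrite mulr_suml big_seq [X in _ <= X]big_seq; apply: ler_sum => y yS.
  have [y0 yq] := hS y yS.
  have [y20|yp] := eqVneq y.2 0.
    by rewrite (yq y20 : y.1 = 0) Nw0 !mul0r.
  rewrite ler_wpM2l ?Nw_ge0 //; apply: sqrt_inv_anti; last exact: vle.
  by rewrite lt_neqAle eq_sym yp y0.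
-
  move=> q v a hS.
  have [v0 vq] := hS (q, v) (mem_head _ _).
  split.
    split => /=; first by rewrite mulr_ge0 // sqr_ge0.
    move/eqP; rewrite mulf_eq0 => /orP[|/eqP /vq /= ->]; last by rewrite scaler0.
    by rewrite sqrf_eq0 => /eqP ->; rewrite scale0r.
  rewrite big_seq1 /Fw /qb /= NwZ.
  have [->|a0] := eqVneq a 0; first by rewrite normr0 !mul0r mulr_ge0 ?Nw_ge0 // invr_ge0 sqrtr_ge0.
  rewrite -mulrA sqrtrM ?sqr_ge0 // sqrtr_sqr invfM.
  by rewrite (mulrC `|a|) -!mulrA (mulrA `|a|) mulfV ?normr_eq0 // mul1r.
-
  move=> q v v' vv' hS.
  have [v0 vq] := hS (q, v) (mem_head _ _).
  split.
    split => /=; first exact: le_trans vv'.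
    move=> v'0; apply: vq; apply/le_anti; rewrite v0 andbT -v'0 //.
  rewrite big_seq1 /Fw /qb /=.
  have [v00|vp] := eqVneq v 0; first by rewrite (vq v00 : q = 0) Nw0 !mul0r.
  rewrite ler_wpM2l ?Nw_ge0 //; apply: sqrt_inv_anti => //.
  by rewrite lt_neqAle eq_sym vp v0.
-
  move=> Ss Qs Q S hsz _ _ IH _ IHQ hperm hS.
  have hSj j : (j < size Qs)%N -> forall Q', Q' \in nth [::] Ss j -> invq Q'.
    move=> js Q' Q'in; apply: hS; rewrite (perm_mem hperm).
    apply/flattenP; exists (nth [::] Ss j) => //.
    by apply: mem_nth; rewrite hsz.
  have hQs : forall Q', Q' \in Qs -> invq Q'.
    move=> Q' /(nthP (0, 0)) [j js <-].
    by have [] := IH j js (hSj j js).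
  have [iQ leQ] := IHQ hQs.
  split => //; apply: le_trans leQ _.
  rewrite (perm_big _ hperm) big_flatten /=.
  rewrite (big_nth (0, 0)) (big_nth [::]) hsz !big_mkord.
  apply: ler_sum => j _.
  by have [] := IH j (ltn_ord j) (hSj j (ltn_ord j)).
Qed.

Lemma arbF {R : realType} {n : nat} (w : 'I_n -> R) :
  (forall j, 0 <= w j) -> arbitrage_free (fun Q : query R n => (Fw w Q)%:E).
Proof.
move=> w0 S Q _ hS _ hd.
have hS' : forall Q', Q' \in S -> invq Q'.
  move=> Q' /hS Q'0; split; first exact: ltW.
  by move=> e; move: Q'0; rewrite e ltxx.
have [_ le] := arbF_ind w w0 _ _ hd hS'.
by rewrite sumEFin lee_fin.
Qed.

Lemma lap_pt (R : realType) (b m1 m2 t : R) : 0 < b ->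
  lap_pdf b (t - m1) <= expR (`|m1 - m2| / b) * lap_pdf b (t - m2).
Proof.
move=> b0; rewrite /lap_pdf mulrA -expRD.
rewrite ler_pM2r ?invr_gt0 ?mulr_gt0 //.
rewrite ler_expR -mulrDl ler_pM2r ?invr_gt0 //.
have h : t - m2 = (t - m1) + (m1 - m2) by ring.
have := ler_normD (t - m1) (m1 - m2); rewrite -h; lra.
Qed.

Lemma lap_prob_le (R : realType) (b m1 m2 : R) (S : set R) : 0 < b -> measurable S ->
  (lap_prob b m1 S <= (expR (`|m1 - m2| / b))%:E * lap_prob b m2 S)%E.
Proof.
move=> b0 mS; rewrite /lap_prob.
have mf m : measurable_fun S (fun t => (lap_pdf b (t - m))%:E).
  apply/measurable_EFinP; apply: measurable_funTS; apply: continuous_measurable_fun.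
  move=> x; apply: (@continuous_comp _ _ _ (fun t : R => t - m) (lap_pdf b)); last exact: cont_lap.
  by apply: cvgD; [exact: cvg_id|exact: cvg_cst].
rewrite -(ge0_integralZl (@lebesgue_measure R) mS (mf m2)) //.
apply: ge0_le_integral => //.
- by move=> x _; rewrite lee_fin lap_pdf_ge0.
- exact: mf.
- by apply: measurable_funeM; exact: mf.
- by move=> x _; rewrite -EFinM lee_fin lap_pt.
by move=> x _; rewrite lee_fin lap_pdf_ge0.
Qed.

Lemma ratio_bound (R : realType) (a c : \bar R) (L : R) : 0 <= L ->
  (0 < a)%E -> (0 < c)%E ->
  (a <= (expR L)%:E * c)%E -> (c <= (expR L)%:E * a)%E ->
  `|ln (fine a / fine c)| <= L.
Proof.
move=> L0; case: a => [x| |] //; case: c => [y| |] //=; rewrite ?lte_fin.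
- move=> x0 y0; rewrite -!EFinM !lee_fin => hx hy.
  have xy : 0 < x / y by rewrite divr_gt0.
  have eL : 0 < expR L := expR_gt0 L.
  rewrite ler_norml; apply/andP; split.
    rewrite -[X in X <= _]expRK ler_ln ?posrE ?expR_gt0 // expRN.
    by rewrite -(ler_pM2l eL) mulfV ?gt_eqF // mulrA ler_pdivlMr // mul1r.
  rewrite -[X in _ <= X]expRK ler_ln ?posrE ?expR_gt0 //.
  by rewrite ler_pdivrMr // mulrC.
- by move=> x0 _; rewrite invr0 mulr0 ln0 ?normr0.
Qed.

Lemma priv_le (R : realType) (n : nat) (D : set R) (M : 'rV[R]_n -> R) (beta : R)
  (i : 'I_n) (B : R) : 0 < beta ->
  (forall z : 'rV[R]_n, (forall j, D (z ord0 j)) -> `|M z - M (zero_at z i)| <= B) ->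
  (privacy_loss D M beta i <= (B / beta)%:E)%E.
Proof.
move=> b0 hB; apply: ge_ereal_sup => e [S [z [mS Dz pa pc ->]]].
rewrite lee_fin.
have L0 : 0 <= `|M z - M (zero_at z i)| / beta by rewrite divr_ge0 // ltW.
apply: (le_trans (@ratio_bound _ _ _ _ L0 pa pc _ _)).
- exact: lap_prob_le.
- by rewrite distrC; exact: lap_prob_le.
- by rewrite ler_pM2r ?invr_gt0 // hB.
Qed.

Lemma sup_abs_ub (R : realType) (E : set R) :
  (exists M : R, forall x, E x -> `|x| <= M) ->
  forall x, E x -> `|x| <= sup [set `|y| | y in E].
Proof.
move=> [M hM] x Ex; apply: sup_upper_bound; last by exists x.
split; first by exists `|x|, x.
by exists M => _ [y Ey <-]; exact: hM.
Qed.

Lemma sup_abs_ge0 (R : realType) (E : set R) :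
  (exists M : R, forall x, E x -> `|x| <= M) ->
  0 <= sup [set `|y| | y in E].
Proof.
move=> hM; have [->|/set0P [x Ex]] := eqVneq E set0.
  by rewrite image_set0 sup0.
exact: le_trans (normr_ge0 x) (@sup_abs_ub _ _ hM x Ex).
Qed.

Lemma sum_zero_at (R : realType) (n : nat) (F : 'I_n -> R -> R) (z : 'rV[R]_n) (i : 'I_n) :
  (forall j, F j 0 = 0) ->
  \sum_(j < n) F j (z ord0 j) - \sum_(j < n) F j (zero_at z i ord0 j) = F i (z ord0 i).
Proof.
move=> F0; rewrite -sumrB (bigD1 i) //= big1 ?addr0.
  by rewrite /zero_at mxE eqxx F0 subr0.
by move=> j /negbTE ji; rewrite /zero_at mxE ji subrr.
Qed.

Lemma eqle (R : realType) (x y : R) : x = y -> x <= y.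
Proof. by move=> ->. Qed.

Lemma fun_micro (R : realType) (A P k : R) :
  (fun t => A + ((P + t) - P) / k) = (fun t => A + t * k^-1).
Proof. by apply: funext => t; rewrite addrAC subrr add0r. Qed.

Theorem proposition12 (R : realType) (n : nat) (X Y : set R) (c : 'rV[R]_n)
    (b' : R)
    (hX : exists M : R, forall x, X x -> `|x| <= M)
    (hY0 : forall y, Y y -> 0 <= y)
    (hY : exists M : R, forall y, Y y -> `|y| <= M)
    (hc : forall i, Y (c ord0 i))
    (hb' : deltaY Y < b') :
  let gamma := gammaX X in
  let delta := deltaY Y in
  [/\ arbitrage_free (Eprice gamma delta b' c),
      (forall (i : 'I_n) (Q : query R n), 0 < Q.2 -> Q.1 ord0 i = 0 ->
         Emicro gamma delta b' c i Q = 0%E),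
      (forall i : 'I_n, arbitrage_free (Emicro gamma delta b' c i)),
      (forall Q : query R n, 0 < Q.2 ->
         (\sum_(i < n) Emicro gamma delta b' c i Q <= Eprice gamma delta b' c Q)%E)
    & (forall (i : 'I_n) (Q : query R n), 0 < Q.2 ->
         (Emicro gamma delta b' c i Q >=
          (c ord0 i)%:E *
          (privacy_loss X (K_mean Q) (qb Q) i
           + privacy_loss Y (K'_mean gamma delta b' Q) b' i))%E)].
Proof.
move=> gamma delta.
have g0 : 0 <= gamma by exact: (@sup_abs_ge0 _ X hX).
have d0 : 0 <= delta by exact: (@sup_abs_ge0 _ Y hY).
have gub : forall x, X x -> `|x| <= gamma := @sup_abs_ub _ X hX.
have dub : forall y, Y y -> `|y| <= delta := @sup_abs_ub _ Y hY.
have bd : 0 < b' - delta by rewrite subr_gt0.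
have b0 : 0 < b' by exact: le_lt_trans d0 hb'.
have c0 : forall j, 0 <= c ord0 j by move=> j; exact: hY0.
set kk := gamma * b' / (b' - delta).
have kk0 : 0 <= kk by rewrite divr_ge0 ?mulr_ge0 // ltW.
have EP : Eprice gamma delta b' c = fun Q => (Fw (fun j => kk * c ord0 j) Q)%:E.
  apply: funext => Q; rewrite /Eprice.
  have -> : (fun t => Pprice gamma delta b' c Q + t) =
            (fun t => Pprice gamma delta b' c Q + t * 1).
    by apply: funext => t; rewrite mulr1.
  rewrite lapE_lin //; congr EFin.
  rewrite /Pprice /K'_mean /Pcoef /Fw /Nw /kk.
  under [X in _ = X * _]eq_bigr do rewrite -mulrA.
  rewrite -mulr_sumr invfM; ring.
have EM : forall i, Emicro gamma delta b' c i =
    fun Q => (kk * c ord0 i * `|Q.1 ord0 i| * (qb Q)^-1)%:E.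
  move=> i; apply: funext => Q; rewrite /Emicro /= fun_micro lapE_lin //; congr EFin.
  rewrite /kk invfM; move: (qb Q)^-1 => iq.
  by field; rewrite ?gt_eqF.
have FM : forall i, (fun Q : query R n => (kk * c ord0 i * `|Q.1 ord0 i| * (qb Q)^-1)%:E) =
    fun Q => (Fw (fun j => if j == i then kk * c ord0 i else 0) Q)%:E.
  move=> i; apply: funext => Q; congr EFin; rewrite /Fw /Nw (bigD1 i) //= eqxx big1 ?addr0 //.
  by move=> j /negbTE ->; rewrite mul0r.
split.
- rewrite EP; apply: arbF => j; exact: mulr_ge0.
- by move=> i Q _ q0; rewrite EM q0 normr0 mulr0 mul0r.
- move=> i; rewrite EM FM; apply: arbF => j.
  by case: (j == i) => //; exact: mulr_ge0.
- move=> Q _; rewrite EP; under eq_bigr do rewrite EM.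
  rewrite sumEFin lee_fin /Fw /Nw mulr_suml; apply: eqle; apply: eq_bigr => j _.
  by [].
- move=> i Q Q0.
  have qp : 0 < qb Q by rewrite /qb sqrtr_gt0 divr_gt0.
  have P0 : 0 <= Pcoef gamma delta b' Q.
    rewrite /Pcoef; apply: divr_ge0; first by rewrite mulr_ge0 // ltW.
    by rewrite mulr_ge0 // ltW.
  have h1 : (privacy_loss X (K_mean Q) (qb Q) i <= ((gamma * `|Q.1 ord0 i|) / qb Q)%:E)%E.
    apply: priv_le => // z Dz; rewrite /K_mean.
    rewrite (@sum_zero_at _ _ (fun j x => Q.1 ord0 j * x) z i) => [|j]; last by rewrite mulr0.
    by rewrite normrM mulrC ler_wpM2r // gub.
  have h2 : (privacy_loss Y (K'_mean gamma delta b' Q) b' i <=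
             ((Pcoef gamma delta b' Q * delta * `|Q.1 ord0 i|) / b')%:E)%E.
    apply: priv_le => // z Dz; rewrite /K'_mean -mulrBr.
    rewrite (@sum_zero_at _ _ (fun j x => x * `|Q.1 ord0 j|) z i) => [|j]; last by rewrite mul0r.
    rewrite normrM (ger0_norm P0) -mulrA ler_wpM2l // normrM normr_id ler_wpM2r //.
    exact: dub.
  rewrite EM /=.
  apply: le_trans (lee_wpmul2l _ (leeD h1 h2)) _; first by rewrite lee_fin.
  rewrite -EFinD -EFinM lee_fin; apply: eqle.
  rewrite /Pcoef /kk invfM; move: (qb Q)^-1 => iq.
  by field; rewrite ?gt_eqF.
Qed.
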